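(* Let $K$ be a polyhedral cone and let $S$ be any slack matrix of $K$. Then $K$ is pointed if and only if $\dim(K)=\operatorname{rank}(S)$.
   Context: A matrix $S\in\mathbb{R}^{p\times q}$ is a slack matrix of a polyhedral cone $K\subseteq\mathbb{R}^n$ if there are $A\in\mathbb{R}^{p\times n}$, $B\in\mathbb{R}^{n\times q}$ with $K=\{x\in\mathbb{R}^n: x^TB\ge 0\}=\{y^TA: y\in\mathbb{R}_+^p\}$ and $S=AB$. A cone is pointed if its lineality space (the largest linear subspace it contains) is $\{0\}$. The dimension of a cone is the dimension of its linear span. *)

(* Defs.v *)
From HB Require Import structures.
From mathcomp Require Import all_boot all_order all_algebra.
From mathcomp Require Import reals.
Set Implicit Arguments. Unset Strict Implicit. Unset Printing Implicit Defensive.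
Import Order.TTheory GRing.Theory Num.Theory.
Local Open Scope ring_scope.

(* K = { x : x^T B >= 0 } (H-description) *)
Definition hcone (R : realType) (n q : nat) (B : 'M[R]_(n, q)) (x : 'rV[R]_n) : Prop :=
  forall j : 'I_q, 0 <= (x *m B) ord0 j.

(* K = { y^T A : y in R^p_+ } (V-description) *)
Definition vcone (R : realType) (p n : nat) (A : 'M[R]_(p, n)) (x : 'rV[R]_n) : Prop :=
  exists y : 'rV[R]_p, (forall i : 'I_p, 0 <= y ord0 i) /\ x = y *m A.

Definition is_slack_matrix (R : realType) (n p q : nat) (K : 'rV[R]_n -> Prop)
  (S : 'M[R]_(p, q)) : Prop :=
  exists (A : 'M[R]_(p, n)) (B : 'M[R]_(n, q)),
    (forall x, K x <-> hcone B x) /\ (forall x, K x <-> vcone A x) /\ S = A *m B.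

(* K is pointed: its lineality space (largest linear subspace contained in K)
   is {0}, i.e. every linear subspace (row space of some U) contained in K is 0. *)
Definition pointed (R : realType) (n : nat) (K : 'rV[R]_n -> Prop) : Prop :=
  forall U : 'M[R]_n, (forall x : 'rV[R]_n, (x <= U)%MS -> K x) -> \rank U = 0%N.

Definition span_dim (R : realType) (n : nat) (K : 'rV[R]_n -> Prop) (d : nat) : Prop :=
  (exists U : 'M[R]_n, \rank U = d /\ forall x, K x -> (x <= U)%MS) /\
  (forall U : 'M[R]_n, (forall x, K x -> (x <= U)%MS) -> (d <= \rank U)%N).

(* Main.v *)
Require Import Defs.
From mathcomp Require Import all_boot all_order all_algebra.
From mathcomp Require Import reals.
From mathcomp Require Import zify.
Import Order.TTheory GRing.Theory Num.Theory.
Local Open Scope ring_scope.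

Set Implicit Arguments. Unset Strict Implicit.
Section Aux.
Variables (R : realType) (n p q : nat) (K : 'rV[R]_n -> Prop)
  (A : 'M[R]_(p, n)) (B : 'M[R]_(n, q)).
Hypotheses (HB : forall x, K x <-> hcone B x) (HA : forall x, K x <-> vcone A x).

Lemma F1 x : K x -> (x <= A)%MS.
Proof. by move=> /HA [y [_ ->]]; apply: submxMl. Qed.

Lemma F2 i : K (row i A).
Proof.
apply/HA; exists (delta_mx 0 i); split; last exact: rowE.
by move=> j; rewrite mxE ler0n.
Qed.

Lemma ker_K x : (x <= kermx B)%MS -> K x.
Proof.
move=> /sub_kermxP H; apply/HB => j; by rewrite H mxE.
Qed.

Lemma F3 : (kermx B <= A)%MS.
Proof. by apply/row_subP => i; apply: F1; apply: ker_K; apply: row_sub. Qed.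

Lemma F4 : pointed K <-> \rank (kermx B) = 0%N.
Proof.
split.
  by move=> P; apply: P => x; apply: ker_K.
move=> H0 U HU.
have sU : (U <= kermx B)%MS.
  apply/row_subP => i; apply/sub_kermxP.
  have K1 := HU _ (row_sub i U).
  have K2 : K (- row i U) by apply: HU; rewrite eqmx_opp row_sub.
  move/HB: K1 => K1; move/HB: K2 => K2.
  apply/matrixP => a j; rewrite [a]ord1 [RHS]mxE.
  apply/eqP; rewrite eq_le; apply/andP; split; last exact: K1.
  by move: (K2 j); rewrite mulNmx [X in _ <= X]mxE oppr_ge0.
by apply/eqP; rewrite -leqn0 -H0 mxrankS.
Qed.

Lemma F5 d : span_dim K d <-> d = \rank A.
Proof.
split.
  move=> [[U [<- HU]] H2].
  have sA : (A <= U)%MS by apply/row_subP => i; apply: HU; apply: F2.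
  apply/eqP; rewrite eqn_leq (mxrankS sA) andbT.
  by rewrite -(genmxE A); apply: H2 => x /F1; rewrite genmxE.
move=> ->; split.
  by exists <<A>>%MS; rewrite genmxE; split => // x /F1; rewrite genmxE.
by move=> U HU; apply: mxrankS; apply/row_subP => i; apply: HU; apply: F2.
Qed.

End Aux.

Theorem lemma2p13 (R : realType) (n p q : nat) (K : 'rV[R]_n -> Prop)
  (S : 'M[R]_(p, q)) :
  is_slack_matrix K S -> (pointed K <-> span_dim K (\rank S)).
Proof.
move=> [A [B [HB [HA ->]]]].
rewrite (F4 HB) (F5 HA).
have := mxrank_mul_ker A B.
rewrite (capmx_idPr (F3 HB HA)) => E.
split => [H0 | H1].
  by rewrite H0 addn0 in E.
rewrite H1 in E; move/eqP: E; rewrite -{2}(addn0 (\rank A)) eqn_add2l.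
by move/eqP.
Qed.
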